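(* Consider the autonomous system in the context, let $\bar\theta^0=(\bar F^0,\mu^0,o^0)\in\Theta$ be any initial condition, and let $o(t)=o(t;\bar\theta^0)$ be the $o$-component of its solution. Then the state $(\bar F,\mu)=(0,\mu^* )$ is a globally asymptotically stable equilibrium of the time-dependent system $$\dot{\bar F}_k=\frac1K\sum_{j}\frac{e^{\bar F_j}}{\sum_\ell\pi_\ell(\bar\theta)e^{\bar F_\ell}}-\frac{e^{\bar F_k}}{\sum_\ell\pi_\ell(\bar\theta)e^{\bar F_\ell}},\qquad \dot\mu_{km}=\frac{e^{\bar F_k}}{\sum_\ell\pi_\ell(\bar\theta)e^{\bar F_\ell}}(\mu^*_{km}-\mu_{km}),$$ where $\bar\theta=(\bar F,\mu,o(t))$, uniformly in the trajectory $o(t)$ (the time $T(\rho,\eta)$ in the definition of global asymptotic stability can be chosen independently of $o(\cdot)$).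
   Context: $K\ge2$, $M\ge1$, $\varepsilon>0$, $\mathcal{P}^\varepsilon(K)$ is the set of probability vectors on $[K]$ with entries $\ge\varepsilon$, and $O^\varepsilon=\{o\in\mathbb{R}^K_{\ge0}:\sum_ko_k\le\varepsilon^{-1}\}$. $\Theta=\mathbb{R}^K\times\mathbb{R}^{KM}\times O^\varepsilon$; $\pi:\Theta\to\mathcal P^\varepsilon(K)$ and $\gamma:\mathbb{R}^{KM}\to\mathcal P^\varepsilon(K)$ are continuously differentiable, and $\mu^*\in\mathbb{R}^{KM}$ is fixed. The autonomous system $\dot{\bar\theta}=\bar g(\bar\theta)$ is given by the two equations displayed in the claim (with $\bar\theta=(\bar F,\mu,o)$) together with $\dot o_k=\dfrac{\pi_k(\bar\theta)}{\gamma_k(\mu)}\dfrac{e^{\bar F_k}}{\sum_\ell\pi_\ell(\bar\theta)e^{\bar F_\ell}}-o_k$. Here $\bar F$ ranges over the hyperplane $\{\sum_k\bar F_k=0\}$ (representing free energies modulo additive constants, shifted so that the exact free energy is $0$), with norm $\|\bar F\|_{\mathbb L}=\|\bar F\|$; distances in $(\bar F,\mu)$ are $\|\bar F\|+\|\mu-\mu^*\|$. Global asymptotic stability of $z^*$ for $\dot z=h(z,t)$: (1) for each $\eta>0$ there is $\delta>0$ independent of $t_0$ with $|z_0-z^*|<\delta\Rightarrow|z(t;z_0,t_0)-z^*|<\eta$ for all $t\ge t_0\ge0$; (2) for all $\eta,\rho>0$ there is $T(\rho,\eta)<\infty$ independent of $t_0$ with $|z(t;z_0,t_0)-z^*|<\eta$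 for all $t\ge t_0+T$ whenever $|z_0-z^*|<\rho$. *)

(* Defs.v *)
From mathcomp Require Import all_boot all_order all_algebra.
From mathcomp Require Import all_classical all_reals all_analysis.
Import Order.TTheory GRing.Theory Num.Theory.
Import numFieldNormedType.Exports.
Local Open Scope ring_scope.
Local Open Scope classical_set_scope.

(* A state theta-bar = (Fbar, mu, o) in R^K x R^{K x M} x R^K.
   Components: th.1.1 = Fbar (row vector), th.1.2 = mu (K x M matrix, mu k m = mu_{km}),
   th.2 = o (row vector). *)
Definition state (R : realType) (K M : nat) : Type :=
  ('rV[R]_K * 'M[R]_(K, M) * 'rV[R]_K)%type.

Definition enorm {R : realType} {m n : nat} (A : 'M[R]_(m, n)) : R :=
  Num.sqrt (\sum_(i < m) \sum_(j < n) A i j ^+ 2).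

Definition prob_eps {R : realType} {K : nat} (eps : R) (p : 'rV[R]_K) : Prop :=
  (forall k : 'I_K, eps <= p 0 k) /\ \sum_(k < K) p 0 k = 1.

Definition in_Oeps {R : realType} {K : nat} (eps : R) (o : 'rV[R]_K) : Prop :=
  (forall k : 'I_K, 0 <= o 0 k) /\ \sum_(k < K) o 0 k <= eps^-1.

Definition in_Theta {R : realType} {K M : nat} (eps : R) (th : state R K M) : Prop :=
  in_Oeps eps th.2.

Definition in_hyper {R : realType} {K : nat} (F : 'rV[R]_K) : Prop :=
  \sum_(k < K) F 0 k = 0.

Definition C1 {R : realType} {V W : normedModType R} (f : V -> W) : Prop :=
  (forall x : V, differentiable f x) /\ (forall v : V, continuous (fun x : V => 'D_v f x)).


Section Dyn.
Context {R : realType} {K M : nat}.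
Variable pi : state R K M -> 'rV[R]_K.
Variable gam : 'M[R]_(K, M) -> 'rV[R]_K.
Variable mustar : 'M[R]_(K, M).

Definition Zden (th : state R K M) : R :=
  \sum_(l < K) pi th 0 l * expR (th.1.1 0 l).

Definition wgt (th : state R K M) (k : 'I_K) : R :=
  expR (th.1.1 0 k) / Zden th.

Definition Fdot (th : state R K M) (k : 'I_K) : R :=
  K%:R^-1 * (\sum_(j < K) wgt th j) - wgt th k.

Definition mudot (th : state R K M) (k : 'I_K) (m : 'I_M) : R :=
  wgt th k * (mustar k m - th.1.2 k m).

Definition odot (th : state R K M) (k : 'I_K) : R :=
  pi th 0 k / gam th.1.2 0 k * wgt th k - th.2 0 k.

Definition full_solution (eps : R) (th0 : state R K M) (th : R -> state R K M) : Prop :=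
  th 0 = th0 /\
  (forall t, 0 <= t -> in_Theta eps (th t) /\ in_hyper (th t).1.1) /\
  (forall k : 'I_K, {within `[0, +oo[, continuous (fun t => (th t).1.1 0 k)}) /\
  (forall (k : 'I_K) (m : 'I_M), {within `[0, +oo[, continuous (fun t => (th t).1.2 k m)}) /\
  (forall k : 'I_K, {within `[0, +oo[, continuous (fun t => (th t).2 0 k)}) /\
  (forall t : R, 0 < t ->
     (forall k : 'I_K, is_derive t 1 (fun s => (th s).1.1 0 k) (Fdot (th t) k)) /\
     (forall (k : 'I_K) (m : 'I_M), is_derive t 1 (fun s => (th s).1.2 k m) (mudot (th t) k m)) /\
     (forall k : 'I_K, is_derive t 1 (fun s => (th s).2 0 k) (odot (th t) k))).

Definition tsol (o : R -> 'rV[R]_K) (t0 : R) (z0 : 'rV[R]_K * 'M[R]_(K, M))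
    (z : R -> 'rV[R]_K * 'M[R]_(K, M)) : Prop :=
  z t0 = z0 /\ in_hyper z0.1 /\
  (forall k : 'I_K, {within `[t0, +oo[, continuous (fun t => (z t).1 0 k)}) /\
  (forall (k : 'I_K) (m : 'I_M), {within `[t0, +oo[, continuous (fun t => (z t).2 k m)}) /\
  (forall t : R, t0 < t ->
     (forall k : 'I_K, is_derive t 1 (fun s => (z s).1 0 k) (Fdot ((z t).1, (z t).2, o t) k)) /\
     (forall (k : 'I_K) (m : 'I_M),
        is_derive t 1 (fun s => (z s).2 k m) (mudot ((z t).1, (z t).2, o t) k m))).

Definition dist_eq (z : 'rV[R]_K * 'M[R]_(K, M)) : R :=
  enorm z.1 + enorm (z.2 - mustar).

End Dyn.

(* Main.v *)
Require Import Defs.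
From mathcomp Require Import all_boot all_order all_algebra.
From mathcomp Require Import all_classical all_reals all_analysis.
From mathcomp Require Import ring lra.
Import Order.TTheory GRing.Theory Num.Theory.
Import numFieldNormedType.Exports.
Local Open Scope ring_scope.
Local Open Scope classical_set_scope.
Section H.
Context {R : realType}.

Lemma sq_derive {f : R -> R} {t df : R} : is_derive t 1 f df ->
  is_derive t 1 (fun s => f s * f s) (2 * f t * df).
Proof.
move=> h; have := is_deriveM h h.
have -> : f t *: df + f t *: df = 2 * f t * df by rewrite /GRing.scale /=; ring.
done.
Qed.

Lemma sub_derive {f g : R -> R} {t df dg : R} : is_derive t 1 f df ->
  is_derive t 1 g dg -> is_derive t 1 (fun s => f s - g s) (df - dg).
Proof. move=> hf hg; exact: is_deriveB hf hg. Qed.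

Lemma sum_derive {n} {f : 'I_n -> R -> R} {t : R} {df : 'I_n -> R} :
  (forall i, is_derive t 1 (f i) (df i)) ->
  is_derive t 1 (fun s => \sum_(i < n) f i s) (\sum_(i < n) df i).
Proof. move=> h; rewrite -fct_sumE; exact: is_derive_sum. Qed.

Lemma key_ineq (x y Z B : R) : 0 < Z -> Z <= expR (x + B) -> Z <= expR (y + B) ->
  (x - y) * (x - y) * expR (- B) <= (x - y) * (expR x - expR y) / Z.
Proof.
move=> Z0 hx hy.
wlog yx : x y hx hy / y <= x.
  move=> W; case: (lerP y x) => [|/ltW xy]; first exact: W.
  have := W y x hy hx xy.
  have -> : (y - x) * (y - x) = (x - y) * (x - y) by ring.
  have -> : (y - x) * (expR y - expR x) = (x - y) * (expR x - expR y) by ring.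
  done.
have e1 : expR y * (x - y) <= expR x - expR y.
  have h := expR_ge1Dx (x - y).
  have ey := expR_gt0 y.
  have -> : expR x = expR (x - y) * expR y by rewrite -expRD subrK.
  nra.
have Zle : expR (- B) * Z <= expR y.
  have := ler_wpM2l (expR_ge0 (- B)) hy.
  by rewrite -expRD addrC addrK.
rewrite ler_pdivlMr //.
have xy0 : 0 <= x - y by rewrite subr_ge0.
have := ler_wpM2l (mulr_ge0 xy0 xy0) Zle.
have := ler_wpM2l xy0 e1.
nra.
Qed.

Lemma mono_ineq (x y : R) : 0 <= (x - y) * (expR x - expR y).
Proof.
case: (lerP y x) => h.
  by rewrite mulr_ge0 // subr_ge0 // ler_expR.
rewrite -mulrNN mulr_ge0 // oppr_ge0 subr_le0 ?ler_expR; exact: ltW.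
Qed.

Lemma Z_upper n (p F : 'I_n -> R) (c : R) :
  (forall l, 0 <= p l) -> \sum_l p l = 1 -> (forall l, F l <= c) ->
  \sum_l p l * expR (F l) <= expR c.
Proof.
move=> p0 p1 Fc; rewrite -[X in _ <= X]mul1r -p1 mulr_suml.
apply: ler_sum => l _; apply: ler_wpM2l => //; rewrite ler_expR; exact: Fc.
Qed.

Lemma Z_pos n (p F : 'I_n -> R) (eps : R) : 0 < eps ->
  (forall l, eps <= p l) -> \sum_l p l = 1 ->
  0 < \sum_l p l * expR (F l).
Proof.
move=> e0 pe p1; case: n p F pe p1 => [|n] p F pe p1.
  by move: p1; rewrite big_ord0 => /eqP; rewrite eq_sym oner_eq0.
rewrite big_ord_recl; apply: ltr_pwDl.
  by rewrite mulr_gt0 ?expR_gt0 // (lt_le_trans e0).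
apply: sumr_ge0 => l _; rewrite mulr_ge0 ?expR_ge0 //; exact: le_trans (ltW e0) (pe _).
Qed.

Lemma enorm_entry m n (A : 'M[R]_(m, n)) i j : `|A i j| <= enorm A.
Proof.
rewrite /enorm -sqrtr_sqr ler_sqrt ?sumr_ge0 //; last first.
  by move=> *; apply: sumr_ge0 => *; rewrite sqr_ge0.
rewrite (bigD1 i) //= (bigD1 j) //= -addrA lerDl addr_ge0 //.
  by apply: sumr_ge0 => *; rewrite sqr_ge0.
by apply: sumr_ge0 => *; apply: sumr_ge0 => *; rewrite sqr_ge0.
Qed.

Lemma enorm_bound m n (A : 'M[R]_(m, n)) (c : R) : 0 <= c ->
  (forall i j, `|A i j| <= c) -> enorm A <= (m * n)%:R * c.
Proof.
move=> c0 h; rewrite /enorm.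
set N : R := (m * n)%:R.
have N0 : 0 <= N by rewrite /N ler0n.
have NN : N <= N ^+ 2.
  rewrite /N -natrX ler_nat; case: (m * n)%N => // k; rewrite expnS leq_pmulr //.
have Nc0 : 0 <= N * c by rewrite mulr_ge0.
rewrite -(ger0_norm Nc0) -sqrtr_sqr ler_sqrt; last by rewrite sqr_ge0.
apply: (@le_trans _ _ (\sum_(i < m) \sum_(j < n) c ^+ 2)).
  apply: ler_sum => i _; apply: ler_sum => j _.
  rewrite -real_normK ?num_real // lerXn2r // ?nnegrE //; exact: h.
have -> : \sum_(i < m) \sum_(j < n) c ^+ 2 = N * c ^+ 2.
  by rewrite !sumr_const !card_ord -mulrnA -mulr_natl mulnC.
have := ler_wpM2r (sqr_ge0 c) NN.
by rewrite exprMn.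
Qed.


Lemma gron (g : R -> R) (t0 a : R) :
  {within `[t0, +oo[, continuous g} ->
  (forall t, t0 < t -> exists d, is_derive t 1 g d /\ d <= - a * g t) ->
  forall t, t0 <= t -> g t <= g t0 * expR (- a * (t - t0)).
Proof.
move=> gc gd t tt0.
pose e := fun s : R => expR (a * (s - t0)).
have ed (s : R) : is_derive s 1 e (a * expR (a * (s - t0))).
  have h1 : is_derive s (1:R) (fun s : R => a * (s - t0)) a.
    have -> : (fun s : R => a * (s - t0)) = a \*: ((@id R) - cst t0) by apply/funext=> x.
    apply: is_derive_eq; rewrite subr0; exact: mulr1.
  rewrite mulrC.
  exact: (@is_derive1_comp _ expR (fun s : R => a * (s - t0)) s _ _ _ h1).
pose h := fun s => g s * e s.
have hd (s : R) : t0 < s -> exists d, is_derive s 1 h d /\ d <= 0.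
  move=> /gd [d [gdd dle]].
  exists (g s * (a * e s) + e s * d); split.
    exact: (@is_deriveM _ _ g e s 1 d _ gdd (ed s)).
  have -> : g s * (a * e s) + e s * d = e s * (d + a * g s) by ring.
  rewrite mulr_ge0_le0 ?expR_ge0 //; lra.
have ec : continuous e.
  by move=> x; apply/differentiable_continuous/derivable1_diffP; case: (ed x).
have hc : {within `[t0, +oo[, continuous h}.
  have ecw : {within `[t0, +oo[, continuous e} by apply: continuous_subspaceT.
  move=> x; apply: cvgM; [exact: gc | exact: ecw].
have := @ler0_derive1_nincry R h t0.
have dh : forall x, x \in `]t0, +oo[%R -> derivable h x 1.
  move=> x; rewrite in_itv /= andbT => /hd [d [[dd _] _]]; exact: dd.
have dh0 : forall x, x \in `]t0, +oo[%R -> h^`() x <= 0.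
  move=> x; rewrite in_itv /= andbT => /hd [d [hdd dle]].
  by rewrite derive1E derive_val.
move=> /(_ dh dh0 hc t0 t (lexx _) tt0).
rewrite /h /e subrr mulr0 expR0 mulr1 => H.
have ep : 0 < expR (a * (t - t0)) := expR_gt0 _.
rewrite mulNr expRN.
by rewrite ler_pdivlMr.
Qed.

Lemma sq_le (x B : R) : 0 <= B -> x * x <= B * B -> `|x| <= B.
Proof.
move=> B0 h; apply/ler_normlP; split; nra.
Qed.

Lemma core (K M : nat) (eps : R) (pi : state R K M -> 'rV[R]_K)
  (mustar : 'M[R]_(K, M)) (o : R -> 'rV[R]_K) (t0 : R) z0 z :
  (0 < K)%N -> 0 < eps ->
  (forall t, t0 < t -> forall F mu, prob_eps eps (pi (F, mu, o t))) ->
  tsol pi mustar o t0 z0 z ->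
  let D t i j := (z t).1 0 i - (z t).1 0 j in
  let E t k m := (z t).2 k m - mustar k m in
  [/\ (forall t, t0 <= t -> \sum_(k < K) (z t).1 0 k = 0),
      (forall t, t0 <= t -> forall i j, D t i j * D t i j <= D t0 i j * D t0 i j),
      (forall t, t0 <= t -> forall k m, E t k m * E t k m <= E t0 k m * E t0 k m) &
      (forall B, 0 <= B -> (forall i j, `|D t0 i j| <= B) -> forall t, t0 <= t ->
         (forall i j, D t i j * D t i j <= D t0 i j * D t0 i j * expR (- (2 * expR (- B)) * (t - t0))) /\
         (forall k m, E t k m * E t k m <= E t0 k m * E t0 k m * expR (- (2 * expR (- B)) * (t - t0))))].
Proof.
move=> K0 eps0 hpi [zt0 [hyp [cF [cU hd]]]] D E.
have Kn0 : K%:R != 0 :> R by rewrite pnatr_eq0 -lt0n.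
set Z := fun t => Zden pi ((z t).1, (z t).2, o t).
have Zp : forall t, t0 < t -> 0 < Z t.
  move=> t tt; have [pe p1] := hpi t tt (z t).1 (z t).2.
  exact: (@Z_pos K (fun l => pi ((z t).1, (z t).2, o t) 0 l) (fun l => (z t).1 0 l) eps eps0 pe p1).
have Fd : forall t i j, t0 < t -> is_derive t 1 (fun s => D s i j * D s i j)
    (- (2 * (D t i j * (expR ((z t).1 0 i) - expR ((z t).1 0 j)) / Z t))).
  move=> t i j tt; have [hF _] := hd t tt.
  have := sq_derive (sub_derive (hF i) (hF j)).
  rewrite /Fdot /wgt /= -/(Z t) => h; apply: (is_derive_eq h).
  have := lt0r_neq0 (Zp t tt); rewrite /D => Zn0; field; by rewrite Zn0 Kn0.
have Ed : forall t k m, t0 < t -> is_derive t 1 (fun s => E s k m * E s k m)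
    (- (2 * (expR ((z t).1 0 k) / Z t) * (E t k m * E t k m))).
  move=> t k m tt; have [_ hU] := hd t tt.
  have := sq_derive (sub_derive (hU k m) (is_derive_cst (mustar k m) t 1)).
  rewrite /mudot /wgt /= -/(Z t) => h; apply: (is_derive_eq h).
  rewrite /E; ring.
have Sd : forall t, t0 < t -> is_derive t 1
    (fun s => (\sum_(k < K) (z s).1 0 k) * (\sum_(k < K) (z s).1 0 k)) 0.
  move=> t tt; have [hF _] := hd t tt.
  have := sq_derive (sum_derive hF).
  move=> h; apply: (is_derive_eq h).
  rewrite /Fdot sumrB sumr_const card_ord; set W := \sum_(j < K) _; rewrite -mulr_natr; field; exact: Kn0.
have cD : forall i j, {within `[t0, +oo[, continuous (fun s => D s i j * D s i j)}.
  by move=> i j x; apply: cvgM; apply: cvgB; apply: cF.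
have cE : forall k m, {within `[t0, +oo[, continuous (fun s => E s k m * E s k m)}.
  by move=> k m x; apply: cvgM; apply: cvgB; [apply: cU| apply: cvg_cst|apply: cU|apply: cvg_cst].
have cS : {within `[t0, +oo[, continuous
    (fun s => (\sum_(k < K) (z s).1 0 k) * (\sum_(k < K) (z s).1 0 k))}.
  have cS1 : {within `[t0, +oo[, continuous (fun s => \sum_(k < K) (z s).1 0 k)}.
    apply: continuous_big => //; first exact: add_continuous.
    move=> i _; exact: cF.
  by move=> x; apply: cvgM; apply: cS1.
have P1 : forall t, t0 <= t -> \sum_(k < K) (z t).1 0 k = 0.
  move=> t tt.
  have hS : forall s, t0 < s -> exists d, is_derive s 1
      (fun s => (\sum_(k < K) (z s).1 0 k) * (\sum_(k < K) (z s).1 0 k)) d /\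
      d <= - 0 * ((\sum_(k < K) (z s).1 0 k) * (\sum_(k < K) (z s).1 0 k)).
    by move=> s ss; exists 0; split; [exact: Sd | rewrite oppr0 mul0r].
  have := @gron _ t0 0 cS hS t tt.
  have -> : \sum_(k < K) (z t0).1 0 k = 0 by rewrite zt0; exact: hyp.
  rewrite !mul0r => H.
  apply/eqP; rewrite -sqrf_eq0 expr2 eq_le H /=; exact: mulr_ge0_le0 || nra.
have P2 : forall t, t0 <= t -> forall i j, D t i j * D t i j <= D t0 i j * D t0 i j.
  move=> t tt i j.
  have := @gron _ t0 0 (cD i j) _ t tt.
  rewrite oppr0 mul0r expR0 mulr1; apply => s ss.
  eexists; split; first exact: Fd.
  rewrite mul0r oppr_le0 mulr_ge0 // divr_ge0 ?mono_ineq //; exact: ltW (Zp s ss).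
have P3 : forall t, t0 <= t -> forall k m, E t k m * E t k m <= E t0 k m * E t0 k m.
  move=> t tt k m.
  have := @gron _ t0 0 (cE k m) _ t tt.
  rewrite oppr0 mul0r expR0 mulr1; apply => s ss.
  eexists; split; first exact: Ed.
  have ee : 0 <= E s k m * E s k m by rewrite -expr2 sqr_ge0.
  have w0 : 0 <= expR ((z s).1 0 k) / Z s by rewrite divr_ge0 ?expR_ge0 // ltW ?Zp.
  rewrite mul0r oppr_le0; nra.
split => // B B0 hB t tt.
have Dle : forall s, t0 <= s -> forall i j, `|D s i j| <= B.
  move=> s ss i j; apply: sq_le => //; apply: (le_trans (P2 s ss i j)).
  have /ler_normlP [h1 h2] := hB i j; nra.
have Zle : forall s, t0 < s -> forall i, Z s <= expR ((z s).1 0 i + B).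
  move=> s ss i; have [pe p1] := hpi s ss (z s).1 (z s).2.
  apply: (@Z_upper K (fun l => pi ((z s).1, (z s).2, o s) 0 l) (fun l => (z s).1 0 l)).
  - move=> l; exact: le_trans (ltW eps0) (pe l).
  - exact: p1.
  - move=> l; have := Dle s (ltW ss) l i; rewrite /D => /ler_normlP [_ h]; lra.
split.
  move=> i j; apply: (@gron _ t0 _ (cD i j) _ t tt) => s ss.
  eexists; split; first exact: Fd.
  have := key_ineq _ _ _ _ (Zp s ss) (Zle s ss i) (Zle s ss j); rewrite -/(D s i j).
  lra.
move=> k m; apply: (@gron _ t0 _ (cE k m) _ t tt) => s ss.
eexists; split; first exact: Ed.
have w : expR (- B) <= expR ((z s).1 0 k) / Z s.
  rewrite ler_pdivlMr ?Zp //.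
  have := ler_wpM2l (expR_ge0 (- B)) (Zle s ss k).
  by rewrite -expRD addrC addrK.
have := ler_wpM2r (mulr_ge0 (sqr_ge0 _) (lexx _)) w.
have ee : 0 <= E s k m * E s k m by rewrite -expr2 sqr_ge0.
nra.
Qed.

Lemma avg_bound n (F : 'I_n -> R) k c : (0 < n)%N -> \sum_j F j = 0 ->
  (forall j, `|F k - F j| <= c) -> `|F k| <= c.
Proof.
move=> n0 s0 h.
have e : n%:R * F k = \sum_j (F k - F j).
  by rewrite sumrB sumr_const card_ord s0 subr0 mulr_natl.
have np : 0 < n%:R :> R by rewrite ltr0n.
have : `|n%:R * F k| <= n%:R * c.
  rewrite e; apply: (le_trans (ler_norm_sum _ _ _)).
  have -> : n%:R * c = \sum_(j < n) c by rewrite sumr_const card_ord mulr_natl.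
  by apply: ler_sum => j _; exact: h.
by rewrite normrM normr_nat ler_pM2l.
Qed.

Lemma dist_bound K M (z : 'rV[R]_K * 'M[R]_(K, M)) (mustar : 'M[R]_(K, M)) (c : R) :
  0 <= c -> (forall k, `|z.1 0 k| <= c) ->
  (forall k m, `|z.2 k m - mustar k m| <= c) ->
  dist_eq mustar z <= (1 * K)%:R * c + (K * M)%:R * c.
Proof.
move=> c0 h1 h2; rewrite /dist_eq; apply: lerD; apply: enorm_bound => // i j.
  by rewrite (ord1 i); exact: h1.
by rewrite !mxE; exact: h2.
Qed.

End H.
Local Close Scope classical_set_scope.

Theorem proposition1 (R : realType) (K M : nat) (hK : (2 <= K)%N) (hM : (1 <= M)%N)
  (eps : R) (heps : 0 < eps)
  (pi : state R K M -> 'rV[R]_K) (gam : 'M[R]_(K, M) -> 'rV[R]_K)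
  (mustar : 'M[R]_(K, M))
  (pi_C1 : C1 pi) (gam_C1 : C1 gam)
  (pi_range : forall th : state R K M, in_Theta eps th -> prob_eps eps (pi th))
  (gam_range : forall mu : 'M[R]_(K, M), prob_eps eps (gam mu)) :
  (* (1) uniform (in t0) stability, for every trajectory o(.) of the full system *)
  (forall (th0 : state R K M) (th : R -> state R K M),
     in_Theta eps th0 -> in_hyper th0.1.1 ->
     full_solution pi gam mustar eps th0 th ->
     forall eta : R, 0 < eta ->
     exists delta : R, 0 < delta /\
       forall (t0 : R) (z0 : 'rV[R]_K * 'M[R]_(K, M)) (z : R -> 'rV[R]_K * 'M[R]_(K, M)),
         0 <= t0 -> tsol pi mustar (fun t => (th t).2) t0 z0 z ->
         dist_eq mustar z0 < delta ->
         forall t : R, t0 <= t -> dist_eq mustar (z t) < eta)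
  /\
  (* (2) uniform attractivity, with T independent of t0 and of the trajectory o(.) *)
  (forall eta rho : R, 0 < eta -> 0 < rho ->
     exists T : R,
       forall (th0 : state R K M) (th : R -> state R K M),
         in_Theta eps th0 -> in_hyper th0.1.1 ->
         full_solution pi gam mustar eps th0 th ->
         forall (t0 : R) (z0 : 'rV[R]_K * 'M[R]_(K, M)) (z : R -> 'rV[R]_K * 'M[R]_(K, M)),
           0 <= t0 -> tsol pi mustar (fun t => (th t).2) t0 z0 z ->
           dist_eq mustar z0 < rho ->
           forall t : R, t0 + T <= t -> dist_eq mustar (z t) < eta).
Proof.
move: pi_C1 gam_C1 => _ _.
have K0 : (0 < K)%N by apply: leq_trans hK.
have hpiT : forall (th0 : state R K M) th, full_solution pi gam mustar eps th0 th ->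
    forall t0, 0 <= t0 -> forall t, t0 < t -> forall F mu,
    prob_eps eps (pi (F, mu, (fun t => (th t).2) t)).
  move=> th0 th [_ [hT _]] t0 t00 t tt F mu; apply: pi_range.
  by have [+ _] := hT t (le_trans t00 (ltW tt)).
set N : R := (1 * K)%:R + (K * M)%:R.
have N0 : 0 < N by rewrite /N ltr_pwDl ?ler0n // ltr0n mul1n.
have r0b : forall z0 : 'rV[R]_K * 'M[R]_(K, M),
    (forall k, `|z0.1 0 k| <= dist_eq mustar z0) /\
    (forall k m, `|z0.2 k m - mustar k m| <= dist_eq mustar z0) /\
    0 <= dist_eq mustar z0.
  move=> z0; have e1 := sqrtr_ge0 (\sum_(i < 1) \sum_(j < K) z0.1 i j ^+ 2).
  have e2 := sqrtr_ge0 (\sum_(i < K) \sum_(j < M) (z0.2 - mustar) i j ^+ 2).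
  rewrite /dist_eq; split; [|split].
  - move=> k; apply: (le_trans (@enorm_entry _ _ _ z0.1 0 k)); rewrite /enorm; lra.
  - move=> k m; have := @enorm_entry _ _ _ (z0.2 - mustar) k m; rewrite !mxE /enorm; lra.
  - rewrite /enorm; lra.
split.
  move=> th0 th _ _ hfull eta eta0.
  exists (eta / (2 * N)); split; first by rewrite divr_gt0 ?mulr_gt0.
  move=> t0 z0 z t00 hz hd t tt.
  have := @core _ K M eps pi mustar _ t0 z0 z K0 heps (hpiT _ _ hfull t0 t00) hz.
  move=> /= [P1 P2 P3 _].
  have [zt0 _] := hz.
  have [b1 [b2 r0]] := r0b z0.
  set r := dist_eq mustar z0 in b1 b2 r0 hd.
  have Db : forall i j, `|(z t).1 0 i - (z t).1 0 j| <= 2 * r.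
    move=> i j; have := P2 t tt i j; rewrite zt0 => h.
    apply: (le_trans (@sq_le _ _ `|z0.1 0 i - z0.1 0 j| (normr_ge0 _) _)).
      by rewrite -normrM ger0_norm // -expr2 sqr_ge0.
    apply: (le_trans (ler_normB _ _)); have := b1 i; have := b1 j; lra.
  have Eb : forall k m, `|(z t).2 k m - mustar k m| <= 2 * r.
    move=> k m; have := P3 t tt k m; rewrite zt0 => h.
    apply: (le_trans (@sq_le _ _ `|z0.2 k m - mustar k m| (normr_ge0 _) _)).
      by rewrite -normrM ger0_norm // -expr2 sqr_ge0.
    have := b2 k m; lra.
  have Fb : forall k, `|(z t).1 0 k| <= 2 * r.
    move=> k; apply: (@avg_bound _ K (fun j => (z t).1 0 j) k (2 * r) K0 (P1 t tt)); exact: Db.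
  have := @dist_bound _ K M (z t) mustar (2 * r) (mulr_ge0 (ler0n _ 2) r0) Fb Eb.
  rewrite -/N -mulrDl => h.
  apply: (le_lt_trans h).
  have : r * (2 * N) < eta by rewrite -ltr_pdivlMr ?mulr_gt0.
  by rewrite /N; lra.
move=> eta rho eta0 rho0.
set B := 2 * rho.
set a := 2 * expR (- B).
set c := eta / (2 * N).
have B0 : 0 < B by rewrite /B mulr_gt0.
have a0 : 0 < a by rewrite /a mulr_gt0 ?expR_gt0.
have c0 : 0 < c by rewrite /c divr_gt0 ?mulr_gt0.
set T := B * B / (c * c * a).
have T0 : 0 <= T.
  rewrite /T; apply: divr_ge0; first exact: mulr_ge0 (ltW B0) (ltW B0).
  exact: mulr_ge0 (mulr_ge0 (ltW c0) (ltW c0)) (ltW a0).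
have hT : B * B <= c * c * (1 + a * T).
  have -> : c * c * (1 + a * T) = c * c + B * B.
    by rewrite /T; field; rewrite !lt0r_neq0.
  have := mulr_ge0 (ltW c0) (ltW c0); lra.
exists T => th0 th _ _ hfull t0 z0 z t00 hz hr t tt.
have tt' : t0 <= t by lra.
have := @core _ K M eps pi mustar _ t0 z0 z K0 heps (hpiT _ _ hfull t0 t00) hz.
move=> /= [P1 _ _ P4].
have [zt0 _] := hz.
have [b1 [b2 r0]] := r0b z0.
set r := dist_eq mustar z0 in b1 b2 r0 hr.
have hB : forall i j, `|(z t0).1 0 i - (z t0).1 0 j| <= B.
  move=> i j; rewrite zt0; apply: (le_trans (ler_normB _ _)).
  have := b1 i; have := b1 j; rewrite /B; lra.
have [Q1 Q2] := P4 B (ltW B0) hB t tt'.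
set X := expR (- a * (t - t0)) in Q1 Q2.
have X0 : 0 <= X by rewrite /X expR_ge0.
have hX : X * (1 + a * T) <= 1.
  have h1 : X <= expR (- (a * T)).
    rewrite /X ler_expR mulNr lerN2; apply: ler_wpM2l; [exact: ltW | lra].
  have h2 := expR_ge1Dx (a * T).
  have h3 : expR (- (a * T)) * expR (a * T) = 1 by rewrite -expRD addNr expR0.
  have h4 := expR_ge0 (- (a * T)).
  have := ler_wpM2l X0 h2; have := ler_wpM2r (expR_ge0 (a * T)) h1; lra.
have fin : forall x x0 : R, x * x <= x0 * x0 * X -> `|x0| <= B -> `|x| <= c.
  move=> x x0 h hx0; apply: sq_le; first exact: ltW.
  have hD0 : x0 * x0 <= B * B by move/ler_normlP: hx0 => [? ?]; nra.
  have h1 := ler_wpM2r X0 hD0.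
  have h2 := ler_wpM2r X0 hT.
  have := ler_wpM2l (mulr_ge0 (ltW c0) (ltW c0)) hX; rewrite mulr1 => h3.
  lra.
have Db : forall i j, `|(z t).1 0 i - (z t).1 0 j| <= c.
  by move=> i j; apply: fin (Q1 i j) (hB i j).
have Eb : forall k m, `|(z t).2 k m - mustar k m| <= c.
  move=> k m; apply: fin (Q2 k m) _.
  rewrite zt0; apply: (le_trans (b2 k m)); rewrite /B; lra.
have Fb : forall k, `|(z t).1 0 k| <= c.
  move=> k; apply: (@avg_bound _ K (fun j => (z t).1 0 j) k c K0 (P1 t tt')); exact: Db.
have := @dist_bound _ K M (z t) mustar c (ltW c0) Fb Eb.
move=> h; apply: (le_lt_trans h).
have : c * (2 * N) = eta by rewrite /c mulfVK // mulf_neq0 // lt0r_neq0.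
rewrite /N in N0 *; nra.
Qed.
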